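(* Let $(\mathfrak g,[\cdot,\cdot],\delta,n)$ be an NL bialgebra and $k\ge1$. Then $\delta_{({}^tn)^k}(\xi)=\iota_{({}^tn)^k}\delta(\xi)-\delta(n^k\xi)$ defines a 1-cocycle for $[\cdot,\cdot]$ if and only if $\delta$ is a 1-cocycle for the deformed bracket $[\cdot,\cdot]_{n^k}$.
   Context: $(\mathfrak g,[\cdot,\cdot])$ is a finite-dimensional real Lie algebra; $\langle\mathrm{ad}^*_\xi\eta,\zeta\rangle=-\langle\eta,[\xi,\zeta]\rangle$. Elements of $\wedge^2\mathfrak g$ are skew-symmetric bilinear forms on $\mathfrak g^*$; for linear $\phi:\mathfrak g^*\to\mathfrak g^*$, $(\iota_\phi P)(\eta_1,\eta_2)=P(\phi\eta_1,\eta_2)+P(\eta_1,\phi\eta_2)$; $\mathrm{ad}^{(2)}_\xi=\iota_{\mathrm{ad}^*_\xi}$. A linear $\delta:\mathfrak g\to\wedge^2\mathfrak g$ is a 1-cocycle for $[\cdot,\cdot]$ if $\mathrm{ad}^{(2)}_{\xi_1}\delta(\xi_2)-\mathrm{ad}^{(2)}_{\xi_2}\delta(\xi_1)-\delta([\xi_1,\xi_2])=0$; a Lie bialgebra $(\mathfrak g,[\cdot,\cdot],\delta)$ has such $\delta$ with dual bracket $\langle[\eta_1,\eta_2]_{\mathfrak g^*},\xi\rangle=\delta(\xi)(\eta_1,\eta_2)$ a Lie bracket. For linear $m:\mathfrak g\to\mathfrak g$, $[\xi_1,\xi_2]_m=[m\xi_1,\xi_2]+[\xi_1,m\xi_2]-m[\xi_1,\xi_2]$;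 $m$ is Nijenhuis if $m[\xi_1,\xi_2]_m=[m\xi_1,m\xi_2]$. ${}^tn$ is the transpose of $n$, $\underline{\mathrm{ad}}^*_{\,\xi}=[{}^tn,\mathrm{ad}^*_\xi]$. A 1-cocycle for $[\cdot,\cdot]_{n^k}$ is a linear $\delta'$ with $\iota_{A^k_{\xi_1}}\delta'(\xi_2)-\iota_{A^k_{\xi_2}}\delta'(\xi_1)-\delta'([\xi_1,\xi_2]_{n^k})=0$, where $A^k_\xi=[({}^tn)^k,\mathrm{ad}^*_\xi]+\mathrm{ad}^*_{n^k\xi}$. An NL bialgebra $(\mathfrak g,[\cdot,\cdot],\delta,n)$ is a Lie bialgebra with a Nijenhuis operator $n$ on $\mathfrak g$ such that (1) $\delta$ is a 1-cocycle for $[\cdot,\cdot]_n$; (2) ${}^tn$ is Nijenhuis on $(\mathfrak g^*,[\cdot,\cdot]_{\mathfrak g^*})$, i.e. ${}^tn([{}^tn\eta_1,\eta_2]_{\mathfrak g^*}+[\eta_1,{}^tn\eta_2]_{\mathfrak g^*}-{}^tn[\eta_1,\eta_2]_{\mathfrak g^*})=[{}^tn\eta_1,{}^tn\eta_2]_{\mathfrak g^*}$; (3) $C(\delta,n)=0$, meaning $\iota_{{}^tn\circ\underline{\mathrm{ad}}^*_{\xi_1}}\delta(\xi_2)-\iota_{{}^tn\circ\underline{\mathrm{ad}}^*_{\xi_2}}\delta(\xi_1)=\iota_{\underline{\mathrm{ad}}^*_{\xi_1}}\delta(n\xi_2)-\iota_{\underline{\mathrm{ad}}^*_{\xi_2}}\delta(n\xi_1)$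 for all $\xi_1,\xi_2$. *)

(* Defs.v *)
From HB Require Import structures.
From mathcomp Require Import all_boot all_order all_algebra.
From mathcomp Require Import reals.
Set Implicit Arguments. Unset Strict Implicit. Unset Printing Implicit Defensive.
Import Order.TTheory GRing.Theory Num.Theory.
Local Open Scope ring_scope.

Section NLDefs.
Variable R : realType.
Variable N : nat.
(* g = R^N (row vectors); g^* is identified with R^N via the pairing below. *)
Local Notation V := 'rV[R]_N.

Definition pairing (eta xi : V) : R := \sum_(i < N) eta 0 i * xi 0 i.

Definition lin (f : V -> V) : Prop :=
  forall (a : R) (x y : V), f (a *: x + y) = a *: f x + f y.

Definition bilin (b : V -> V -> V) : Prop :=
  (forall (a : R) (x y z : V), b (a *: x + y) z = a *: b x z + b y z) /\
  (forall (a : R) (x y z : V), b z (a *: x + y) = a *: b z x + b z y).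

Definition is_lie (b : V -> V -> V) : Prop :=
  bilin b /\ (forall x, b x x = 0) /\
  (forall x y z, b x (b y z) + b y (b z x) + b z (b x y) = 0).

(* bivectors: elements of wedge^2 g, seen as functions on g^* x g^* *)
Definition biv := V -> V -> R.

Definition is_biv (P : biv) : Prop :=
  (forall (a : R) (x y z : V), P (a *: x + y) z = a * P x z + P y z) /\
  (forall x y, P x y = - P y x).

Definition iota (phi : V -> V) (P : biv) : biv :=
  fun e1 e2 => P (phi e1) e2 + P e1 (phi e2).

(* ad^*_x : <ad^*_x eta, zeta> = - <eta, [x, zeta]> *)
Definition coad (b : V -> V -> V) (x : V) : V -> V :=
  fun eta => \row_j (- pairing eta (b x (delta_mx 0 j))).

(* transpose ^t n : <^t n eta, xi> = <eta, n xi> *)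
Definition transp (n : V -> V) : V -> V :=
  fun eta => \row_j pairing eta (n (delta_mx 0 j)).

Definition commf (f g : V -> V) : V -> V := fun eta => f (g eta) - g (f eta).

Definition lin_delta (d : V -> biv) : Prop :=
  forall (a : R) (x y e1 e2 : V), d (a *: x + y) e1 e2 = a * d x e1 e2 + d y e1 e2.

(* d : g -> wedge^2 g is linear and a 1-cocycle for the bracket b, where the
   action of x on g^* is A x (ad^(2)_x = iota_{A x}). *)
Definition cocycle_for (A : V -> V -> V) (b : V -> V -> V) (d : V -> biv) : Prop :=
  lin_delta d /\ (forall x, is_biv (d x)) /\
  (forall x y e1 e2, iota (A x) (d y) e1 e2 - iota (A y) (d x) e1 e2
                       - d (b x y) e1 e2 = 0).

Definition cocycle (b : V -> V -> V) (d : V -> biv) : Prop :=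
  cocycle_for (coad b) b d.

Definition deformed (b : V -> V -> V) (m : V -> V) : V -> V -> V :=
  fun x y => b (m x) y + b x (m y) - m (b x y).

Definition nijenhuis (b : V -> V -> V) (m : V -> V) : Prop :=
  lin m /\ (forall x y, m (deformed b m x y) = b (m x) (m y)).

(* dual bracket: <[e1, e2]_{g^*}, xi> = d(xi)(e1, e2) *)
Definition dual_br (d : V -> biv) : V -> V -> V :=
  fun e1 e2 => \row_j d (delta_mx 0 j) e1 e2.

Definition lie_bialgebra (b : V -> V -> V) (d : V -> biv) : Prop :=
  is_lie b /\ cocycle b d /\ is_lie (dual_br d).

Definition Ak (b : V -> V -> V) (n : V -> V) (k : nat) (x : V) : V -> V :=
  fun eta => commf (iter k (transp n)) (coad b x) eta + coad b (iter k n x) eta.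

Definition adu (b : V -> V -> V) (n : V -> V) (x : V) : V -> V :=
  commf (transp n) (coad b x).

Definition C_vanish (b : V -> V -> V) (d : V -> biv) (n : V -> V) : Prop :=
  forall x1 x2 e1 e2,
    iota (transp n \o adu b n x1) (d x2) e1 e2
      - iota (transp n \o adu b n x2) (d x1) e1 e2
    = iota (adu b n x1) (d (n x2)) e1 e2 - iota (adu b n x2) (d (n x1)) e1 e2.

Definition NL_bialgebra (b : V -> V -> V) (d : V -> biv) (n : V -> V) : Prop :=
  [/\ lie_bialgebra b d, nijenhuis b n,
      cocycle_for (Ak b n 1) (deformed b n) d,
      nijenhuis (dual_br d) (transp n) & C_vanish b d n].

Definition delta_k (d : V -> biv) (n : V -> V) (k : nat) : V -> biv :=
  fun x e1 e2 => iota (iter k (transp n)) (d x) e1 e2 - d (iter k n x) e1 e2.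

End NLDefs.

(* Main.v *)
Require Import Defs.
From HB Require Import structures.
From mathcomp Require Import all_boot all_order all_algebra.
From mathcomp Require Import reals.
From mathcomp Require Import ring lra.
Import GRing.Theory Num.Theory.
Set Implicit Arguments.
Local Open Scope ring_scope.

Section Aux.
Variable R : realType.
Variable N : nat.
Local Notation V := 'rV[R]_N.

Lemma biv_add (P : biv R N) : is_biv P -> forall x y z, P (x + y) z = P x z + P y z.
Proof. by move=> [H _] x y z; rewrite -(scale1r x) H mul1r scale1r. Qed.

Lemma biv_opp (P : biv R N) : is_biv P -> forall x z, P (- x) z = - P x z.
Proof.
move=> [H _] x z; have := H (-1) x 0 z; rewrite addr0 scaleN1r => ->.
have h0 : P 0 z = 0.
  have := H 1 0 0 z; rewrite scaler0 !addr0 mul1r => E; lra.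
by rewrite h0 addr0 mulN1r.
Qed.

Lemma biv_l3 (P : biv R N) : is_biv P -> forall a b c z,
  P (a - b + c) z = P a z - P b z + P c z.
Proof. by move=> hP a b c z; rewrite !biv_add // biv_opp. Qed.

Lemma biv_r3 (P : biv R N) : is_biv P -> forall a b c z,
  P z (a - b + c) = P z a - P z b + P z c.
Proof.
move=> hP a b c z; have [_ S] := hP.
rewrite S biv_l3 // (S a) (S b) (S c); lra.
Qed.

Lemma lin_iter (f : V -> V) k : lin f -> lin (iter k f).
Proof.
move=> hf; elim: k => [|k IH] a x y //=.
by rewrite IH hf.
Qed.

Lemma lin_transp (n : V -> V) : lin (transp n).
Proof.
move=> a x y; apply/rowP => j; rewrite !mxE /pairing.
rewrite big_distrr -big_split /=; apply: eq_bigr => i _.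
by rewrite !mxE mulrDl mulrA.
Qed.

Lemma iota_biv (phi : V -> V) P : lin phi -> is_biv P -> is_biv (Defs.iota phi P).
Proof.
move=> hphi hP; have [H S] := hP; split.
- move=> a x y z; rewrite /Defs.iota hphi H H; lra.
- move=> x y; rewrite /Defs.iota (S (phi x)) (S x); lra.
Qed.

Lemma solve3 (a b c : R) : a - b - c = 0 -> c = a - b.
Proof. by move=> h; apply/eqP; rewrite eq_sym -subr_eq0 h. Qed.

Lemma key (b : V -> V -> V) (d : V -> biv R N) (n : V -> V) k :
  cocycle b d ->
  forall x y e1 e2,
   Defs.iota (coad b x) (delta_k d n k y) e1 e2 - Defs.iota (coad b y) (delta_k d n k x) e1 e2
     - delta_k d n k (b x y) e1 e2 =
   Defs.iota (Ak b n k x) (d y) e1 e2 - Defs.iota (Ak b n k y) (d x) e1 e2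
     - d (deformed b (iter k n) x y) e1 e2.
Proof.
move=> [Ld [Bd Cd]] x y e1 e2.
set T := iter k (transp n); set m := iter k n.
have c1 := Cd x y (T e1) e2.
have c2 := Cd x y e1 (T e2).
have c4 := Cd (m x) y e1 e2.
have c5 := Cd x (m y) e1 e2.
rewrite /Defs.iota in c1 c2 c4 c5.
move/solve3: c1 => c1; move/solve3: c2 => c2.
move/solve3: c4 => c4; move/solve3: c5 => c5.
have L1 : forall u v e e', d u (Ak b n k v e) e' =
   d u (T (coad b v e)) e' - d u (coad b v (T e)) e' + d u (coad b (m v) e) e'.
  by move=> u v e e'; rewrite /Ak /commf biv_l3.
have L2 : forall u v e e', d u e' (Ak b n k v e) =
   d u e' (T (coad b v e)) - d u e' (coad b v (T e)) + d u e' (coad b (m v) e).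
  by move=> u v e e'; rewrite /Ak /commf biv_r3.
have LD : d (deformed b m x y) e1 e2 =
   d (b (m x) y) e1 e2 + d (b x (m y)) e1 e2 - d (m (b x y)) e1 e2.
  rewrite /deformed (_ : forall u v w : 'rV[R]_N, u + v - w = (-1) *: w + (1 *: u + v)); last first.
    by move=> u v w; rewrite scaleN1r scale1r addrC.
  rewrite !Ld; lra.
rewrite /Defs.iota /delta_k -/T -/m L1 L1 L2 L2 LD /Defs.iota c1 c2 c4 c5; ring.
Qed.

End Aux.

Theorem mainTheorem12 (R : realType) (N : nat)
  (b : 'rV[R]_N -> 'rV[R]_N -> 'rV[R]_N) (d : 'rV[R]_N -> biv R N)
  (n : 'rV[R]_N -> 'rV[R]_N) (k : nat) :
  NL_bialgebra b d n -> (1 <= k)%N ->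
  (cocycle b (delta_k d n k) <-> cocycle_for (Ak b n k) (deformed b (iter k n)) d).
Proof.
move=> [[_ [Hc _]] [Ln _] _ _ _] _.
have Hk := key n k Hc.
have [Ld [Bd _]] := Hc.
split.
- move=> [_ [_ C]]; split; first exact: Ld.
  split; first exact: Bd.
  by move=> x y e1 e2; rewrite -Hk.
- move=> [_ [_ C]]; split.
    move=> a x y e1 e2; rewrite /delta_k /Defs.iota (lin_iter k Ln) !Ld; lra.
  split.
    move=> x; have [H S] := iota_biv (lin_iter k (@lin_transp R N n)) (Bd x).
    have [H' S'] := Bd (iter k n x).
    split.
      by move=> a u v z; rewrite /delta_k H H'; lra.
    by move=> u v; rewrite /delta_k S S'; lra.
  by move=> x y e1 e2; rewrite Hk.
Qed.
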